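(* Under the hypotheses of the following setting: $C_{ti},L^C_{ti},R^C_{ti},\eta_i>0$, $k^C_{1,i},k^C_{2,i},k^C_{3,i}\in\mathbb{R}$, $F_i^C$ as below, $P_i^C$ a real symmetric $3\times3$ matrix of the form $\begin{bmatrix}\eta_i&0&0\\0&p^C_{22,i}&p^C_{23,i}\\0&p^C_{23,i}&p^C_{33,i}\end{bmatrix}$ with $P_i^C>0$, and $Q_i^C=(F_i^C)^TP_i^C+P_i^CF_i^C$ satisfying $Q_i^C\le0$ and $Q_i^C\ne0$. Then for $w\in\mathbb{R}^3$ one has $w^TQ_i^Cw=0$ if and only if $w=(\alpha,0,\beta)^T$ for some $\alpha,\beta\in\mathbb{R}$.
   Context: $F_i^C=\begin{bmatrix}0&\frac{1}{C_{ti}}&0\\ \frac{k^C_{1,i}-1}{L^C_{ti}}&\frac{k^C_{2,i}-R^C_{ti}}{L^C_{ti}}&\frac{k^C_{3,i}}{L^C_{ti}}\\ 0&-1&0\end{bmatrix}$. Inequalities between symmetric matrices are in the semidefinite (Loewner) sense. *)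

(* Defs.v *)
From HB Require Import structures.
From mathcomp Require Import all_boot all_order all_algebra.
Set Implicit Arguments. Unset Strict Implicit. Unset Printing Implicit Defensive.
Import Order.TTheory GRing.Theory Num.Theory.
Local Open Scope ring_scope.

Definition qform (R : numDomainType) (A : 'M[R]_3) (w : 'cV[R]_3) : R :=
  ((w^T *m A *m w) 0 0).

Definition posdef (R : numDomainType) (A : 'M[R]_3) : Prop :=
  forall w : 'cV[R]_3, w != 0 -> 0 < qform A w.
Definition negsemidef (R : numDomainType) (A : 'M[R]_3) : Prop :=
  forall w : 'cV[R]_3, qform A w <= 0.

Definition FC (R : fieldType) (C L Rr k1 k2 k3 : R) : 'M[R]_3 :=
  \matrix_(i < 3, j < 3)
    match nat_of_ord i, nat_of_ord j with
    | 0, 1 => 1 / C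
    | 1, 0 => (k1 - 1) / L
    | 1, 1 => (k2 - Rr) / L
    | 1, 2 => k3 / L
    | 2, 1 => -1
    | _, _ => 0
    end.

Definition PC (R : ringType) (eta p22 p23 p33 : R) : 'M[R]_3 :=
  \matrix_(i < 3, j < 3)
    match nat_of_ord i, nat_of_ord j with
    | 0, 0 => eta
    | 1, 1 => p22
    | 1, 2 => p23
    | 2, 1 => p23
    | 2, 2 => p33
    | _, _ => 0
    end.

Definition vec3 (R : ringType) (a b c : R) : 'cV[R]_3 :=
  \col_(i < 3) match nat_of_ord i with 0 => a | 1 => b | _ => c end.

(* Main.v *)
Require Import Defs.
From HB Require Import structures.
From mathcomp Require Import all_boot all_order all_algebra ring lra.
Import Order.TTheory GRing.Theory Num.Theory.
Local Open Scope ring_scope.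

Lemma qexp (R : realFieldType) (C L Rr eta k1 k2 k3 p22 p23 p33 x y z : R) :
  qform ((FC C L Rr k1 k2 k3)^T *m PC eta p22 p23 p33
          + PC eta p22 p23 p33 *m FC C L Rr k1 k2 k3) (vec3 x y z) =
  2 * (p22 * ((k2 - Rr)/L) - p23) * y^+2 + 2 * p23 * (k3/L) * z^+2
  + 2 * (eta/C + p22 * ((k1 - 1)/L)) * x * y
  + 2 * (p23 * ((k1 - 1)/L)) * x * z
  + 2 * (p22 * (k3/L) + p23 * ((k2 - Rr)/L) - p33) * y * z.
Proof.
rewrite /qform /FC /PC /vec3.
rewrite !(big_ord_recl, big_ord0, mxE) /=.
ring.
Qed.
Lemma vec3E (R : realFieldType) (w : 'cV[R]_3) :
  w = vec3 (w 0 0) (w 1 0) (w 2 0).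
Proof.
apply/matrixP => i j; rewrite !mxE (ord1 j).
by case: i => [[|[|[|]]] ?] //=; congr (w _ _); apply/val_inj.
Qed.
Lemma Qzero (R : realFieldType) (C L Rr eta k1 k2 k3 p22 p23 p33 : R) :
  p23 = 0 -> eta / C + p22 * ((k1 - 1)/L) = 0 ->
  p22 * (k3/L) - p33 = 0 -> p22 * ((k2 - Rr)/L) = 0 ->
  (FC C L Rr k1 k2 k3)^T *m PC eta p22 p23 p33
          + PC eta p22 p23 p33 *m FC C L Rr k1 k2 k3 = 0.
Proof.
move=> h1 h2 h3 h4; subst p23.
apply/matrixP => i j; rewrite /FC /PC !mxE.
rewrite !(big_ord_recl, big_ord0, mxE) /=.
case: i => [[|[|[|]]] ?] //=; case: j => [[|[|[|]]] ?] //=; rewrite ?mxE /=.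
all: try lra.
Qed.

Theorem lemma1 (R : realFieldType)
  (C L Rr eta k1 k2 k3 p22 p23 p33 : R)
  (hC : 0 < C) (hL : 0 < L) (hR : 0 < Rr) (heta : 0 < eta)
  (hP : posdef (PC eta p22 p23 p33))
  (hQ : negsemidef ((FC C L Rr k1 k2 k3)^T *m PC eta p22 p23 p33
                     + PC eta p22 p23 p33 *m FC C L Rr k1 k2 k3))
  (hQ0 : (FC C L Rr k1 k2 k3)^T *m PC eta p22 p23 p33
           + PC eta p22 p23 p33 *m FC C L Rr k1 k2 k3 != 0)
  (w : 'cV[R]_3) :
  qform ((FC C L Rr k1 k2 k3)^T *m PC eta p22 p23 p33
          + PC eta p22 p23 p33 *m FC C L Rr k1 k2 k3) w = 0
  <-> exists a b : R, w = vec3 a 0 b.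
Proof.
have hq : forall x y z : R,
  2 * (p22 * ((k2 - Rr)/L) - p23) * y^+2 + 2 * p23 * (k3/L) * z^+2
  + 2 * (eta/C + p22 * ((k1 - 1)/L)) * x * y
  + 2 * (p23 * ((k1 - 1)/L)) * x * z
  + 2 * (p22 * (k3/L) + p23 * ((k2 - Rr)/L) - p33) * y * z <= 0.
  by move=> x y z; rewrite -qexp; apply: hQ.
set A := 2 * (p22 * ((k2 - Rr)/L) - p23) in hq.
set B := 2 * p23 * (k3/L) in hq.
set D := 2 * (eta/C + p22 * ((k1 - 1)/L)) in hq.
set E := 2 * (p23 * ((k1 - 1)/L)) in hq.
set G := 2 * (p22 * (k3/L) + p23 * ((k2 - Rr)/L) - p33) in hq.
have hD : D = 0.
  apply/eqP/negPn/negP => nz; have := hq ((1 - A)/D) 1 0.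
  have -> : A * 1 ^+ 2 + B * 0 ^+ 2 + D * ((1 - A) / D) * 1 + E * ((1 - A) / D) * 0 +
     G * 1 * 0 = 1 by field.
  by rewrite ler10.
have hE : E = 0.
  apply/eqP/negPn/negP => nz; have := hq ((1 - B)/E) 0 1.
  have -> : A * 0 ^+ 2 + B * 1 ^+ 2 + D * ((1 - B) / E) * 0 + E * ((1 - B) / E) * 1 +
     G * 0 * 1 = 1 by field.
  by rewrite ler10.
have ha : (k1 - 1)/L != 0.
  apply/negP => /eqP h0; move: hD; rewrite /D h0 mulr0 addr0.
  have := divr_gt0 heta hC; lra.
have hp23 : p23 = 0.
  by move: hE; rewrite /E => /eqP; rewrite mulf_eq0 pnatr_eq0 /= mulf_eq0 (negbTE ha) orbF => /eqP.
have hB : B = 0 by rewrite /B hp23 mulr0 mul0r.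
have hG : G = 0.
  apply/eqP/negPn/negP => nz; have := hq 0 1 ((1 - A)/G).
  rewrite hB.
  have -> : A * 1 ^+ 2 + 0 * ((1 - A) / G) ^+ 2 + D * 0 * 1 + E * 0 * ((1 - A) / G) +
     G * 1 * ((1 - A) / G) = 1 by field.
  by rewrite ler10.
have hA : A != 0.
  apply/negP => /eqP hA; move/eqP: hQ0; apply.
  apply: Qzero => //.
  - by move: hD; rewrite /D => /eqP; rewrite mulf_eq0 => /orP [|/eqP //]; rewrite pnatr_eq0.
  - by move: hG; rewrite /G hp23 mul0r addr0 => /eqP; rewrite mulf_eq0 => /orP [|/eqP //]; rewrite pnatr_eq0.
  - by move: hA; rewrite /A hp23 subr0 => /eqP; rewrite mulf_eq0 => /orP [|/eqP //]; rewrite pnatr_eq0.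
have key x y z : qform ((FC C L Rr k1 k2 k3)^T *m PC eta p22 p23 p33
          + PC eta p22 p23 p33 *m FC C L Rr k1 k2 k3) (vec3 x y z) = A * y ^+ 2.
  rewrite qexp -/A -/B -/D -/E -/G hB hD hE hG; ring.
split.
- rewrite [w]vec3E key => /eqP; rewrite mulf_eq0 (negbTE hA) /= expf_eq0 /= => /eqP h.
  by exists (w 0 0), (w 2 0); rewrite h.
- by case=> a [b ->]; rewrite key expr0n /= mulr0.
Qed.
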